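(* Let $\mathcal{H}$ be a real or complex Hilbert space and let $S:\mathcal{H}\to\mathcal{H}$ be a (not necessarily densely defined) linear operator such that $\operatorname{ran}(S\cap S^* )=\mathcal{H}$. Then $S$ is densely defined and self-adjoint.
   Context: Operators are identified with their graphs. For a linear relation $R\subset\mathcal{H}\times\mathcal{H}$ its adjoint is the linear relation $R^*=\{(k',h'):\langle k,k'\rangle=\langle h,h'\rangle\ \forall (h,k)\in R\}$ (possibly multivalued when $R$ is not densely defined). $S\cap S^*$ is the intersection of the graph of $S$ with $S^*$, and $\operatorname{ran}$ denotes its range (set of second coordinates). *)

(* Defs.v *)
From mathcomp Require Import all_boot all_algebra.
From mathcomp Require Import reals complex.
Import GRing.Theory Num.Theory.
Set Implicit Arguments.
Unset Strict Implicit.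
Local Open Scope ring_scope.

(* Inner product spaces / Hilbert spaces over a number field K with a given
   conjugation [conj] (identity for real scalars, complex conjugation for
   complex scalars).  Convention: linear in the first argument. *)
Definition inner_product_space (K : numFieldType) (conj : K -> K)
    (V : lmodType K) (ip : V -> V -> K) : Prop :=
  [/\ (forall (a : K) (x y z : V), ip (a *: x + y) z = a * ip x z + ip y z),
      (forall x y : V, ip y x = conj (ip x y)),
      (forall x : V, 0 <= ip x x)
    & (forall x : V, ip x x = 0 -> x = 0)].

Definition sqnorm (K : numFieldType) (V : lmodType K) (ip : V -> V -> K)
    (x : V) : K := `|ip x x|.

Definition ip_cauchy (K : numFieldType) (V : lmodType K) (ip : V -> V -> K)
    (u : nat -> V) : Prop :=
  forall e : K, 0 < e -> exists N : nat, forall m n : nat,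
    (N <= m)%N -> (N <= n)%N -> sqnorm ip (u m - u n) < e.

Definition ip_converges (K : numFieldType) (V : lmodType K) (ip : V -> V -> K)
    (u : nat -> V) (l : V) : Prop :=
  forall e : K, 0 < e -> exists N : nat, forall n : nat,
    (N <= n)%N -> sqnorm ip (u n - l) < e.

Definition hilbert_space (K : numFieldType) (conj : K -> K)
    (V : lmodType K) (ip : V -> V -> K) : Prop :=
  inner_product_space conj ip /\
  (forall u : nat -> V, ip_cauchy ip u -> exists l : V, ip_converges ip u l).

(* Linear relations in V x V, identified with graphs *)
Definition linear_relation (K : numFieldType) (V : lmodType K)
    (R : V -> V -> Prop) : Prop :=
  [/\ R 0 0,
      (forall h k h' k', R h k -> R h' k' -> R (h + h') (k + k'))
    & (forall (a : K) h k, R h k -> R (a *: h) (a *: k))].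

(* (graph of) a linear operator, with arbitrary (not necessarily dense) domain *)
Definition linear_operator (K : numFieldType) (V : lmodType K)
    (S : V -> V -> Prop) : Prop :=
  linear_relation S /\ (forall h k k', S h k -> S h k' -> k = k').

Definition adjoint (K : numFieldType) (V : lmodType K) (ip : V -> V -> K)
    (R : V -> V -> Prop) : V -> V -> Prop :=
  fun k' h' => forall h k, R h k -> ip k k' = ip h h'.

Definition rel_cap (V : Type) (R1 R2 : V -> V -> Prop) : V -> V -> Prop :=
  fun h k => R1 h k /\ R2 h k.

Definition rel_dom (V : Type) (R : V -> V -> Prop) : V -> Prop :=
  fun h => exists k, R h k.

Definition rel_ran (V : Type) (R : V -> V -> Prop) : V -> Prop :=
  fun k => exists h, R h k.

Definition ip_dense (K : numFieldType) (V : lmodType K) (ip : V -> V -> K)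
    (D : V -> Prop) : Prop :=
  forall (x : V) (e : K), 0 < e -> exists d : V, D d /\ sqnorm ip (x - d) < e.

Definition self_adjoint (K : numFieldType) (V : lmodType K) (ip : V -> V -> K)
    (S : V -> V -> Prop) : Prop :=
  forall h k, S h k <-> adjoint ip S h k.

(* Main.v *)
Require Import Defs.
From HB Require Import structures.
From mathcomp Require Import all_boot all_algebra.
From mathcomp Require Import reals complex.
From mathcomp Require Import ring lra.
From mathcomp Require Import boolp classical_sets.
From mathcomp Require Import order.
Import Order.TTheory GRing.Theory Num.Theory.
Local Open Scope ring_scope.
Section Alg.
Variables (K : numFieldType) (conj : K -> K) (V : lmodType K) (ip : V -> V -> K).
Hypothesis ipL : forall (a : K) (x y z : V), ip (a *: x + y) z = a * ip x z + ip y z.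
Hypothesis ipS : forall x y : V, ip y x = conj (ip x y).
Hypothesis ipD : forall x : V, ip x x = 0 -> x = 0.

Lemma ip0l z : ip 0 z = 0.
Proof.
have := ipL 1 0 0 z; rewrite scale1r addr0 mul1r => h.
by move: h; rewrite -{1}[ip 0 z]addr0 => /addrI.
Qed.

Lemma ipBl x y z : ip (x - y) z = ip x z - ip y z.
Proof.
have := ipL (-1) y x z; rewrite scaleN1r mulN1r => h.
by rewrite addrC h addrC.
Qed.

Variable S : V -> V -> Prop.
Hypothesis Sop : linear_operator S.
Hypothesis Hran : forall k : V, rel_ran (rel_cap S (adjoint ip S)) k.

Lemma adj_sub : forall u v, adjoint ip S u v -> S u v.
Proof.
move=> u v Huv; case: (Hran v) => g [Sg Ag].
have E : forall h k, S h k -> ip u k = ip g k.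
  move=> h k Shk; by rewrite ipS (Huv _ _ Shk) -(Ag _ _ Shk) -ipS.
have : u - g = 0.
  apply: ipD; case: (Hran (u - g)) => h [Sh _].
  by rewrite ipBl (E _ _ Sh) subrr.
by move/eqP; rewrite subr_eq0 => /eqP ->.
Qed.

Lemma sub_adj : forall h k, S h k -> adjoint ip S h k.
Proof.
move=> h k Shk; case: (Hran k) => g [Sg Ag].
case: Sop => [[S00 SD SZ] Sfun].
have Sd : S (h - g) 0.
  have := SD _ _ _ _ Shk (SZ (-1) _ _ Sg).
  by rewrite !scaleN1r subrr.
have : h - g = 0.
  apply: ipD; case: (Hran (h - g)) => a [Sa Aa].
  by rewrite -(Aa _ _ Sd) ip0l.
by move/eqP; rewrite subr_eq0 => /eqP ->.
Qed.

Lemma sa : self_adjoint ip S.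
Proof. by move=> h k; split; [apply: sub_adj | apply: adj_sub]. Qed.

Hypothesis conj0 : conj 0 = 0.

Lemma orth0 y : (forall d, rel_dom S d -> ip d y = 0) -> y = 0.
Proof.
move=> H; case: Sop => [[S00 SD SZ] Sfun].
apply: (Sfun 0) => //; apply: adj_sub => h k Shk.
by rewrite ipS ip0l conj0 H //; exists k.
Qed.
End Alg.
Section Dens.
Variables (R : realType) (V : lmodType R) (ip : V -> V -> R).
Hypothesis H : hilbert_space (fun x : R => x) ip.
Variable M : V -> Prop.
Hypothesis M0 : M 0.
Hypothesis MD : forall a b, M a -> M b -> M (a + b).
Hypothesis MZ : forall (t : R) a, M a -> M (t *: a).
Hypothesis O : forall y, (forall d, M d -> ip d y = 0) -> y = 0.

Let ipL : forall (a : R) (x y z : V), ip (a *: x + y) z = a * ip x z + ip y z.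
Proof. by case: H => [[]]. Qed.
Let ipS : forall x y : V, ip y x = ip x y.
Proof. by case: H => [[]]. Qed.
Let ipP : forall x : V, 0 <= ip x x.
Proof. by case: H => [[]]. Qed.
Let ipDf : forall x : V, ip x x = 0 -> x = 0.
Proof. by case: H => [[]]. Qed.
Let ipC : forall u : nat -> V, ip_cauchy ip u -> exists l : V, ip_converges ip u l.
Proof. by case: H. Qed.

Let ip0 z : ip 0 z = 0. Proof.
have := ipL 1 0 0 z; rewrite scale1r addr0 mul1r => h.
by move: h; rewrite -{1}[ip 0 z]addr0 => /addrI.
Qed.
Let ipZ a x z : ip (a *: x) z = a * ip x z.
Proof. by rewrite -[a *: x]addr0 ipL ip0 addr0. Qed.
Let ipDl x y z : ip (x + y) z = ip x z + ip y z.
Proof. by rewrite -{1}[x]scale1r ipL mul1r. Qed.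
Let ipB x y z : ip (x - y) z = ip x z - ip y z.
Proof. by rewrite -scaleN1r addrC ipL mulN1r addrC. Qed.
Let ipDr x y z : ip z (x + y) = ip z x + ip z y.
Proof. by rewrite ipS ipDl ipS [ip y z]ipS. Qed.
Let ipZr a x z : ip z (a *: x) = a * ip z x.
Proof. by rewrite ipS ipZ ipS. Qed.

Let N x := ip x x.

Let NE s t a b : N (s *: a + t *: b) = s * s * N a + 2 * s * t * ip a b + t * t * N b.
Proof.
rewrite /N ipDl !ipDr !ipZ !ipZr [ip b a]ipS; ring.
Qed.

Let Nopp a : N (- a) = N a.
Proof. by rewrite -scaleN1r -[_ *: a]addr0 -[0 : V](scale0r a) NE; rewrite /N; ring. Qed.

Let sqn v : sqnorm ip v = N v.
Proof. by rewrite /sqnorm ger0_norm. Qed.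

Let CS a b : ip a b * ip a b <= N a * N b.
Proof.
have h := ipP (N b *: a + (- ip a b) *: b).
rewrite -/(N _) NE in h.
have hb := ipP b; have ha := ipP a; rewrite -/(N a) -/(N b) in hb ha h.
have [b0|bpos] := eqVneq (N b) 0.
  have -> := ipDf b b0; rewrite ipS ip0 /N ip0; lra.
have bp : 0 < N b by rewrite lt_def bpos; apply: hb.
nra.
Qed.

Let eps (n : nat) : R := (n.+1%:R)^-1.
Let eps_gt0 n : 0 < eps n. Proof. by rewrite /eps invr_gt0 ltr0Sn. Qed.
Let eps_le m n : (m <= n)%N -> eps n <= eps m.
Proof.
move=> mn; rewrite /eps lef_pV2 ?posrE ?ltr0Sn // ler_nat ltnS //.
Qed.
Let eps_small e : 0 < e -> exists K, eps K < e.
Proof.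
move=> e0; exists (Num.Def.truncn (e^-1)); rewrite /eps.
have h := truncnS_gt (e^-1).
by rewrite -[X in _ < X]invrK ltf_pV2 ?posrE ?invr_gt0 ?ltr0Sn.
Qed.

Lemma density : ip_dense ip M.
Proof.
move=> x e e0.
pose E : set R := (fun r : R => exists d, M d /\ r = N (x - d)).
have hinf : has_inf E.
  split; first by exists (N (x - 0)); exists 0.
  by exists 0 => r [d [_ ->]]; exact: ipP.
pose del := inf E.
have lb : forall d, M d -> del <= N (x - d).
  move=> d Md; apply: ge_inf; first by case: hinf.
  by exists d.
have ex : forall n, exists d, M d /\ N (x - d) < del + eps n.
  move=> n; have [r [d [Md ->]] hr] := inf_adherent (eps_gt0 n) hinf.
  by exists d.
have [dn hdn] := choice ex.
have cau : forall m n, N (dn m - dn n) <= 2 * eps n + 2 * eps m.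
  move=> m n.
  have [Mn hn] := hdn n; have [Mm hm] := hdn m.
  pose w := (2 : R)^-1 *: (dn n + dn m).
  have Mw : M w by apply: MZ; apply: MD.
  have hw := lb _ Mw.
  have e1 : dn m - dn n = 1 *: (x - dn n) + (-1) *: (x - dn m).
    by rewrite scale1r scaleN1r opprB [RHS]addrC addrA addrNK.
  have e2 : 2 *: (x - w) = 1 *: (x - dn n) + 1 *: (x - dn m).
    rewrite scalerBr /w scalerA mulfV ?pnatr_eq0 // scale1r !scale1r.
    by rewrite scaler_nat mulr2n opprD addrACA.
  have e3 : N (2 *: (x - w)) = 4 * N (x - w).
    by rewrite -[2 *: _]addr0 -[0 : V](scale0r (x - w)) NE /N; ring.
  rewrite e1 NE.
  move: e3; rewrite e2 NE => e3.
  lra.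
have [p hp] : exists p, ip_converges ip dn p.
  apply: ipC => e' e'0.
  have [K hK] : exists K, eps K < e' / 4 by apply: eps_small; lra.
  exists K => m n Km Kn; rewrite sqn.
  have := cau m n; have := eps_le _ _ Km; have := eps_le _ _ Kn.
  have := eps_gt0 K. lra.
have orth : forall d, M d -> ip (x - p) d = 0.
  move=> d Md; set c := ip (x - p) d.
  have [//|c0] := eqVneq c 0; exfalso.
  have cc : 0 < c * c by rewrite lt_def mulf_neq0 // -expr2 sqr_ge0.
  have Nd0 := ipP d; rewrite -/(N d) in Nd0.
  pose s := (N d + 1)^-1.
  have Nd1 : N d + 1 != 0 by apply/negP => /eqP; lra.
  have sE : s * (N d + 1) = 1 by rewrite /s mulVf.
  have s0 : 0 < s by rewrite /s invr_gt0; lra.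
  pose q := c * c * s.
  have q0 : 0 < q by rewrite /q; nra.
  have [K1 hK1] : exists K, eps K < q / 2 by apply: eps_small; lra.
  have [K2 hK2] : exists N0 : nat, forall n, (N0 <= n)%N -> sqnorm ip (dn n - p) < q / 16.
    by apply: hp; lra.
  pose n := maxn K1 K2.
  have en : eps n < q / 2.
    have := eps_le _ _ (leq_maxl K1 K2); rewrite -/n; lra.
  have Nn : N (p - dn n) < q / 16.
    by rewrite -Nopp opprB -sqn; apply: hK2; exact: leq_maxr.
  have Np0 := ipP (p - dn n); rewrite -/(N _) in Np0.
  pose t := c * s.
  have [Mn hn] := hdn n.
  have := lb (dn n + t *: d) (MD _ _ Mn (MZ t _ Md)).
  rewrite (_ : x - (dn n + t *: d) = 1 *: (x - dn n) + (- t) *: d); last first.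
    by rewrite scale1r scaleNr opprD addrA.
  rewrite NE => hl.
  set cn := ip (x - dn n) d in hl.
  have rE : cn - c = ip (p - dn n) d.
    by rewrite /cn /c -ipB; congr (ip _ d); rewrite opprB addrC addrA addrNK.
  have rb := CS (p - dn n) d; rewrite -rE in rb.
  have qE : q = c * c * s by []. have tE : t = c * s by [].
  clearbody q t cn s c del.
  move: hl hn en rb Nn Np0 Nd0 sE s0 q0 cc.
  rewrite qE tE.
  move: (N d) (N (x - dn n)) (N (p - dn n)) (eps n) => Nd Nx Np en'.
  move=> hl hn en rb Nn Np0 Nd0 sE s0 q0 cc.
  rename cn into cn'; rename c into c'; rename s into s'.
  have a1 : s' * Nd <= 1 by nra.
  have a2 : c' * s' * (c' * s') * Nd <= c' * c' * s'.
    have : 0 <= c' * c' * s' * (1 - s' * Nd) by apply: mulr_ge0; nra.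
    nra.
  have a3 : 2 * (c' * s') * cn' < c' * c' * s' + c' * c' * s' / 2 by nra.
  have a4 : (cn' - c') * (cn' - c') <= c' * c' / 16.
    have : Np * Nd <= c' * c' * s' / 16 * Nd by nra.
    have : c' * c' * s' * Nd <= c' * c' by nra.
    nra.
  have a5 : 2 * c' * (cn' - c') >= - (c' * c') / 2.
    have : 0 <= (c' / 2 + 2 * (cn' - c')) * (c' / 2 + 2 * (cn' - c')) by rewrite -expr2 sqr_ge0.
    nra.
  have : 0 <= s' * (2 * c' * (cn' - c') + c' * c' / 2) by apply: mulr_ge0; nra.
  nra.
have px : x - p = 0.
  by apply: O => d Md; rewrite ipS; apply: orth.
have px' : p = x by apply/eqP; rewrite eq_sym -subr_eq0 px.
have [N0 hN0] := hp e e0.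
exists (dn N0); split; first by case: (hdn N0).
rewrite sqn -Nopp opprB -sqn -px'; exact: hN0.
Qed.
End Dens.
Set Implicit Arguments.
Unset Strict Implicit.
Definition RV (R : realType) (V : lmodType R[i]) : Type := V.
Arguments RV {R} V.
HB.instance Definition _ (R : realType) (V : lmodType R[i]) :=
  GRing.Zmodule.on (RV V).

Section RVmod.
Variables (R : realType) (V : lmodType R[i]).
Definition rscale (a : R) (v : RV V) : RV V := (a%:C)%C *: (v : V).
Lemma rscaleA a b v : rscale a (rscale b v) = rscale (a * b) v.
Proof. by rewrite /rscale scalerA rmorphM. Qed.
Lemma rscale1 : left_id 1 rscale.
Proof. by move=> v; rewrite /rscale rmorph1 scale1r. Qed.
Lemma rscaleDr : right_distributive rscale +%R.
Proof. by move=> a u v; rewrite /rscale scalerDr. Qed.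
Lemma rscaleDl v : {morph rscale^~ v : a b / a + b}.
Proof. by move=> a b; rewrite /rscale rmorphD scalerDl. Qed.
End RVmod.

HB.instance Definition _ (R : realType) (V : lmodType R[i]) :=
  GRing.Zmodule_isLmodule.Build R (RV V) (@rscaleA R V) (@rscale1 R V)
    (@rscaleDr R V) (@rscaleDl R V).

Section CxLemmas. Variable R : realType.
Lemma ReD (u v : R[i]) : complex.Re (u + v) = complex.Re u + complex.Re v.
Proof. by case: u => a b; case: v => c d; reflexivity. Qed.
Lemma ImD (u v : R[i]) : complex.Im (u + v) = complex.Im u + complex.Im v.
Proof. by case: u => a b; case: v => c d; reflexivity. Qed.
Lemma ReM (a : R) (w : R[i]) : complex.Re ((a%:C)%C * w) = a * complex.Re w.
Proof. case: w => b c. rewrite -[LHS]/(a * b - 0 * c). rewrite /=; ring. Qed.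
Lemma Rei (w : R[i]) : complex.Re ('i%C * w) = - complex.Im w.
Proof. case: w => b c. rewrite -[LHS]/(0 * b - 1 * c). rewrite /=; ring. Qed.
Lemma ReJ (w : R[i]) : complex.Re (Num.conj w) = complex.Re w.
Proof. by case: w. Qed.
Lemma cmp (z e : R[i]) : 0 <= z -> 0 <= e -> (z < e) = (complex.Re z < complex.Re e).
Proof. by move=> hz he; rewrite ltcE (ger0_Im hz) (ger0_Im he) eqxx. Qed.
Lemma Re_ge0 (z : R[i]) : 0 <= z -> 0 <= complex.Re z.
Proof. by rewrite lecE => /andP[]. Qed.
Lemma Re_gt0 (z : R[i]) : 0 < z -> 0 < complex.Re z.
Proof. by rewrite ltcE => /andP[]. Qed.
Lemma ReC (z : R[i]) : 0 <= z -> z = ((complex.Re z)%:C)%C.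
Proof. by move=> hz; case: z hz => a b hz; have /= := ger0_Im hz => ->. Qed.
End CxLemmas.

Section CxMain.
Variables (R : realType) (V : lmodType R[i]) (ip : V -> V -> R[i]) (S : V -> V -> Prop).
Hypothesis HH : hilbert_space (@Num.conj R[i]) ip.
Hypothesis Sop : linear_operator S.
Hypothesis Hran : forall k : V, rel_ran (rel_cap S (adjoint ip S)) k.

Let ipL : forall (a : R[i]) (x y z : V), ip (a *: x + y) z = a * ip x z + ip y z.
Proof. by case: HH => [[]]. Qed.
Let ipS : forall x y : V, ip y x = Num.conj (ip x y).
Proof. by case: HH => [[]]. Qed.
Let ipP : forall x : V, 0 <= ip x x.
Proof. by case: HH => [[]]. Qed.
Let ipDf : forall x : V, ip x x = 0 -> x = 0.
Proof. by case: HH => [[]]. Qed.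
Let ipC : forall u : nat -> V, ip_cauchy ip u -> exists l : V, ip_converges ip u l.
Proof. by case: HH. Qed.

Definition ipr (x y : RV V) : R := complex.Re (ip x y).

Let sqr (v : RV V) : sqnorm ipr v = complex.Re (ip v v).
Proof. by rewrite /sqnorm /ipr ger0_norm // Re_ge0. Qed.
Let sqc (v : V) : sqnorm ip v = ip v v.
Proof. by rewrite /sqnorm ger0_norm. Qed.

Lemma hilb_r : hilbert_space (fun x : R => x) ipr.
Proof.
split; first split.
- move=> a x y z; rewrite /ipr.
  by rewrite (_ : (a *: x + y : RV V) = ((a%:C)%C *: (x : V) + y)) // ipL ReD ReM.
- by move=> x y; rewrite /ipr ipS ReJ.
- by move=> x; apply: Re_ge0.
- move=> x; rewrite /ipr => h; apply: ipDf.
  by rewrite (ReC (ipP x)) h.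
- move=> u hu.
  have [l hl] : exists l, ip_converges ip u l.
    apply: ipC => e e0.
    have [N hN] := hu _ (Re_gt0 e0).
    exists N => m n hm hn.
    have hh := hN m n hm hn; rewrite sqr in hh.
    rewrite sqc cmp; [exact hh | exact: ipP | exact: ltW].
  exists l => e e0.
  have e0' : (0 : R[i]) < (e%:C)%C by rewrite ltcR.
  have [N hN] := hl _ e0'.
  exists N => n hn; rewrite sqr.
  have hh := hN n hn; rewrite sqc cmp in hh; [exact hh | exact: ipP | exact: ltW].
Qed.

Lemma cx_main : ip_dense ip (rel_dom S) /\ self_adjoint ip S.
Proof.
have conj0 : Num.conj (0 : R[i]) = 0 by rewrite rmorph0.
split; last exact: (sa _ _ _ _ ipL ipS ipDf S Sop Hran).
case: (Sop) => [[S00 SD SZ] Sfun].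
have M0 : rel_dom S 0 by exists 0.
have MD : forall a b : RV V, rel_dom S a -> rel_dom S b -> rel_dom S (a + b).
  by move=> a b [k1 h1] [k2 h2]; exists (k1 + k2); apply: SD.
have MZ : forall (t : R) (a : RV V), rel_dom S a -> rel_dom S (t *: a).
  by move=> t a [k h]; exists ((t%:C)%C *: k); apply: SZ.
have O : forall y : RV V, (forall d, rel_dom S d -> ipr d y = 0) -> y = 0.
  move=> y hy; apply: (orth0 _ _ _ _ ipL ipS ipDf S Sop Hran conj0).
  move=> d hd.
  have h1 := hy d hd.
  have h2 : complex.Re (ip ('i%C *: d) y) = 0.
    apply: hy; case: hd => k hk; exists ('i%C *: k); exact: SZ.
  rewrite -[_ *: d]addr0 ipL (ip0l _ _ _ ipL) addr0 Rei in h2.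
  rewrite [ip d y]complexE /ipr in h1 *; rewrite h1.
  have -> : complex.Im (ip d y) = 0 by rewrite -[complex.Im _]opprK h2 oppr0.
  by rewrite !rmorph0 mulr0 addr0.
have Hd := @density R (RV V) ipr hilb_r (rel_dom S) M0 MD MZ O.
move=> x e e0; have [d [Md hd]] := Hd x (complex.Re e) (Re_gt0 e0).
exists d; split => //; rewrite sqr in hd.
rewrite sqc cmp; [exact hd | exact: ipP | exact: ltW].
Qed.
End CxMain.

Unset Implicit Arguments.

Lemma real_main (R : realType) (V : lmodType R) (ip : V -> V -> R) (S : V -> V -> Prop) :
  hilbert_space (fun x : R => x) ip ->
  linear_operator S ->
  (forall k : V, rel_ran (rel_cap S (adjoint ip S)) k) ->
  ip_dense ip (rel_dom S) /\ self_adjoint ip S.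
Proof.
move=> H Sop Hran.
have [[ipL ipS ipP ipDf] _] := H.
split; last exact: (sa _ _ _ _ ipL ipS ipDf S Sop Hran).
case: (Sop) => [[S00 SD SZ] Sfun].
have M0 : rel_dom S 0 by exists 0.
have MD : forall a b : V, rel_dom S a -> rel_dom S b -> rel_dom S (a + b).
  by move=> a b [k1 h1] [k2 h2]; exists (k1 + k2); apply: SD.
have MZ : forall (t : R) (a : V), rel_dom S a -> rel_dom S (t *: a).
  by move=> t a [k h]; exists (t *: k); apply: SZ.
have O : forall y : V, (forall d, rel_dom S d -> ip d y = 0) -> y = 0.
  move=> y hy; apply: (orth0 _ (fun x : R => x) _ _ ipL ipS ipDf S Sop Hran) => //.
exact: (@density R V ip H (rel_dom S) M0 MD MZ O).
Qed.

Theorem corollary3p6 (R : realType) :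
  (forall (V : lmodType R) (ip : V -> V -> R) (S : V -> V -> Prop),
      hilbert_space (fun x : R => x) ip ->
      linear_operator S ->
      (forall k : V, rel_ran (rel_cap S (adjoint ip S)) k) ->
      ip_dense ip (rel_dom S) /\ self_adjoint ip S)
  /\
  (forall (V : lmodType R[i]) (ip : V -> V -> R[i]) (S : V -> V -> Prop),
      hilbert_space (@Num.conj R[i]) ip ->
      linear_operator S ->
      (forall k : V, rel_ran (rel_cap S (adjoint ip S)) k) ->
      ip_dense ip (rel_dom S) /\ self_adjoint ip S).
Proof.
split; first exact: real_main.
by move=> V ip S H Sop Hran; apply: cx_main.
Qed.
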